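(* Let $M$ be a finite generic metric space and let $0<r<\min\{s(M)/4,\ e(M)/4,\ t(M)/6\}$. Then the sphere $\{Y\in\mathcal{M}: d_{GH}(M,Y)=r\}$ in $\mathcal{M}$ is path connected (as a subspace of the metric space $(\mathcal{M},d_{GH})$).
   Context: For a metric space $M$ with $\#M\ge3$: $s(M)=\inf\{|xx'|: x\ne x'\}$; $t(M)=\inf\{|xx'|+|x'x''|-|xx''|: x,x',x''\text{ pairwise distinct}\}$; $e(M)=\inf\{\operatorname{dis}f: f\colon M\to M \text{ bijective}, f\ne\mathrm{id}\}$, where $\operatorname{dis}f=\sup_{x,x'}||xx'|-|f(x)f(x')||$. $M$ is called generic if $\#M\ge3$ and $s(M),t(M),e(M)$ are all positive. $\mathcal{M}$ denotes the set of isometry classes of compact metric spaces endowed with the Gromov–Hausdorff distance $d_{GH}$ (a metric on $\mathcal{M}$): $d_{GH}(X,Y)$ is the infimum of $r$ such that there exist a metric space $Z$ and subsets $X',Y'\subset Z$ isometric to $X,Y$ with Hausdorff distance $d_H(X',Y')\le r$. *)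

(* Defs.v *)
From Stdlib Require Import Reals List.
From Coquelicot Require Import Coquelicot.
Open Scope R_scope.

Record MetricSpace := {
  carrier :> Type;
  dist : carrier -> carrier -> R;
  dist_eq0 : forall x y, dist x y = 0 <-> x = y;
  dist_sym : forall x y, dist x y = dist y x;
  dist_tri : forall x y z, dist x z <= dist x y + dist y z
}.
Arguments dist {m} x y.

(** Sequential compactness (equivalent to compactness for metric spaces). *)
Definition compact_space (X : MetricSpace) : Prop :=
  forall u : nat -> X, exists (phi : nat -> nat) (x : X),
    (forall n, (phi n < phi (S n))%nat) /\
    (forall eps, 0 < eps -> exists N, forall n, (N <= n)%nat ->
        dist (u (phi n)) x < eps).

(** Elements of the Gromov–Hausdorff space: nonempty compact metric spaces. *)
Definition compact_metric_space (X : MetricSpace) : Prop :=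
  inhabited X /\ compact_space X.

Definition finite_space (X : MetricSpace) : Prop :=
  exists l : list X, NoDup l /\ forall x : X, In x l.

Definition isometric_embedding {X Z : MetricSpace} (f : X -> Z) : Prop :=
  forall x x', dist (f x) (f x') = dist x x'.

(** d_H(A,B) <= r for subsets A, B of Z
    (i.e. inf { r | A ⊂ U_r(B), B ⊂ U_r(A)} <= r). *)
Definition hausdorff_le (Z : MetricSpace) (A B : Z -> Prop) (r : R) : Prop :=
  (forall a, A a -> forall eps, 0 < eps -> exists b, B b /\ dist a b < r + eps) /\
  (forall b, B b -> forall eps, 0 < eps -> exists a, A a /\ dist b a < r + eps).

Definition dGH (X Y : MetricSpace) : Rbar :=
  Glb_Rbar (fun r => exists (Z : MetricSpace) (f : X -> Z) (g : Y -> Z),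
    isometric_embedding f /\ isometric_embedding g /\
    hausdorff_le Z (fun z => exists x, z = f x) (fun z => exists y, z = g y) r).

Definition sM (M : MetricSpace) : Rbar :=
  Glb_Rbar (fun v => exists x x' : M, x <> x' /\ v = dist x x').

Definition tM (M : MetricSpace) : Rbar :=
  Glb_Rbar (fun v => exists x x' x'' : M, x <> x' /\ x' <> x'' /\ x <> x'' /\
     v = dist x x' + dist x' x'' - dist x x'').

Definition dis {M : MetricSpace} (f : M -> M) : Rbar :=
  Lub_Rbar (fun v => exists x x' : M, v = Rabs (dist x x' - dist (f x) (f x'))).

Definition eM (M : MetricSpace) : Rbar :=
  Glb_Rbar (fun v => exists f : M -> M,
     (forall x y, f x = f y -> x = y) /\ (forall y, exists x, f x = y) /\
     (exists x, f x <> x) /\ dis f = Finite v).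

Definition at_least_three (M : MetricSpace) : Prop :=
  exists x x' x'' : M, x <> x' /\ x' <> x'' /\ x <> x''.

Definition generic (M : MetricSpace) : Prop :=
  at_least_three M /\ Rbar_lt 0 (sM M) /\ Rbar_lt 0 (tM M) /\ Rbar_lt 0 (eM M).

(** Points of the
    quotient are represented by representatives; equality in the quotient
    is d_GH = 0. *)
Definition gh_sphere (M : MetricSpace) (r : R) (Y : MetricSpace) : Prop :=
  compact_metric_space Y /\ dGH M Y = Finite r.

Definition gh_path_connected (S : MetricSpace -> Prop) : Prop :=
  forall X Y : MetricSpace, S X -> S Y ->
  exists gamma : R -> MetricSpace,
    (forall t, 0 <= t <= 1 -> S (gamma t)) /\
    (forall t, 0 <= t <= 1 -> forall eps, 0 < eps -> exists delta, 0 < delta /\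
       forall s, 0 <= s <= 1 -> Rabs (s - t) < delta ->
         Rbar_lt (dGH (gamma s) (gamma t)) (Finite eps)) /\
    dGH (gamma 0) X = Finite 0 /\ dGH (gamma 1) Y = Finite 0.

(* Main.v *)
Require Import Defs.
From Stdlib Require Import Reals Lra Lia Classical ClassicalEpsilon FunctionalExtensionality List.
From Coquelicot Require Import Coquelicot.
Require Import Defs.
Open Scope R_scope.


Lemma abs_le_iff z a : Rabs z <= a <-> -a <= z <= a.
Proof. unfold Rabs; destruct Rcase_abs; split; intros; lra. Qed.

Lemma my_choice {A B : Type} (P : A -> B -> Prop) :
  (forall a, exists b, P a b) -> exists f : A -> B, forall a, P a (f a).
Proof.
  intros H. exists (fun a => proj1_sig (constructive_indefinite_description _ (H a))).
  intro a. apply (proj2_sig (constructive_indefinite_description _ (H a))).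
Qed.

Lemma dist_self (X : MetricSpace) (x : X) : dist x x = 0.
Proof. apply dist_eq0. reflexivity. Qed.

Lemma dist_nonneg (X : MetricSpace) (x y : X) : 0 <= dist x y.
Proof.
  pose proof (dist_tri X x y x). rewrite dist_self in H. rewrite (dist_sym X y x) in H. lra.
Qed.

Definition GHset (X Y : MetricSpace) : R -> Prop :=
  fun r => exists (Z : MetricSpace) (f : X -> Z) (g : Y -> Z),
    isometric_embedding f /\ isometric_embedding g /\
    hausdorff_le Z (fun z => exists x, z = f x) (fun z => exists y, z = g y) r.

Lemma dGH_GH X Y : dGH X Y = Glb_Rbar (GHset X Y).
Proof. reflexivity. Qed.

Lemma dGH_le_of X Y rho : GHset X Y rho -> Rbar_le (dGH X Y) (Finite rho).
Proof. intros H. rewrite dGH_GH. destruct (Glb_Rbar_correct (GHset X Y)) as [H1 _]. apply H1, H. Qed.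

Lemma dGH_ge_of X Y r : (forall rho, GHset X Y rho -> r <= rho) -> Rbar_le (Finite r) (dGH X Y).
Proof. intros H. rewrite dGH_GH. destruct (Glb_Rbar_correct (GHset X Y)) as [_ H2]. apply H2.
  intros x Hx. apply H, Hx. Qed.

Lemma dGH_approx X Y r : dGH X Y = Finite r -> forall eps, 0 < eps ->
  exists rho, GHset X Y rho /\ rho < r + eps.
Proof.
  intros H eps He. apply NNPP; intro Hn.
  assert (Rbar_le (Finite (r+eps)) (dGH X Y)).
  { apply dGH_ge_of. intros rho Hr. apply Rnot_lt_le. intro. apply Hn. exists rho; auto. }
  rewrite H in H0. simpl in H0. lra.
Qed.

Lemma GH_nonneg (X Y : MetricSpace) rho : inhabited X -> GHset X Y rho -> 0 <= rho.
Proof.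
  intros [x] [Z [f [g [_ [_ [H1 _]]]]]].
  apply Rle_plus_epsilon. intros eps He.
  destruct (H1 (f x) (ex_intro _ x eq_refl) eps He) as [b [_ Hb]].
  pose proof (dist_nonneg Z (f x) b). lra.
Qed.

Lemma GH_rel (A B : MetricSpace) rho : GHset A B rho -> forall eps, 0 < eps ->
  exists Rl : A -> B -> Prop, (forall a, exists b, Rl a b) /\ (forall b, exists a, Rl a b) /\
  (forall a a' b b', Rl a b -> Rl a' b' -> Rabs (dist a a' - dist b b') <= 2*rho + 2*eps).
Proof.
  intros [Z [f [g [Hf [Hg [H1 H2]]]]]] eps He.
  exists (fun a b => dist (f a) (g b) < rho + eps). split; [|split].
  - intro a. destruct (H1 (f a) (ex_intro _ a eq_refl) eps He) as [w [[y ->] Hw]]. eauto.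
  - intro b. destruct (H2 (g b) (ex_intro _ b eq_refl) eps He) as [w [[y ->] Hw]].
    exists y. rewrite dist_sym. auto.
  - intros a a' b b' h1 h2. apply abs_le_iff. rewrite <- (Hf a a'), <- (Hg b b').
    pose proof (dist_tri Z (f a) (g b) (f a')). pose proof (dist_tri Z (g b) (g b') (f a')).
    pose proof (dist_tri Z (g b) (f a) (g b')). pose proof (dist_tri Z (f a) (f a') (g b')).
    pose proof (dist_sym Z (f a) (g b)). pose proof (dist_sym Z (f a') (g b')).
    lra.
Qed.

Lemma glb_fin (E : R -> Prop) m x0 : E x0 -> (forall x, E x -> m <= x) ->
  m <= real (Glb_Rbar E) /\ (forall x, E x -> real (Glb_Rbar E) <= x) /\
  (forall eps, 0 < eps -> exists x, E x /\ x < real (Glb_Rbar E) + eps).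
Proof.
  intros Hx0 Hm. destruct (Glb_Rbar_correct E) as [H1 H2].
  destruct (Glb_Rbar E) as [l| |] eqn:Hg.
  - simpl. split; [|split].
    + specialize (H2 (Finite m)). simpl in H2. apply H2. intros x Hx. simpl. auto.
    + intros x Hx. specialize (H1 x Hx). simpl in H1. auto.
    + intros eps He. apply NNPP; intro Hn. specialize (H2 (Finite (l+eps))).
      simpl in H2. assert (l + eps <= l). { apply H2. intros x Hx. simpl.
      apply Rnot_lt_le. intro. apply Hn. exists x. split; auto. } lra.
  - specialize (H1 x0 Hx0). simpl in H1. contradiction.
  - specialize (H2 (Finite m)). simpl in H2. exfalso. apply H2. intros x Hx. simpl. auto.
Qed.

Section Glue.
Variables (A B : MetricSpace) (Rl : A -> B -> Prop) (rho : R).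
Hypothesis Hrho : 0 < rho.
Hypothesis HA : forall a, exists b, Rl a b.
Hypothesis HB : forall b, exists a, Rl a b.
Hypothesis Hd : forall a a' b b', Rl a b -> Rl a' b' -> Rabs (dist a a' - dist b b') <= 2*rho.

Definition cset (a : A) (b : B) : R -> Prop :=
  fun v => exists a' b', Rl a' b' /\ v = dist a a' + rho + dist b' b.
Definition cross a b := real (Glb_Rbar (cset a b)).

Lemma cset_ne a b : exists v, cset a b v.
Proof. destruct (HA a) as [b' H]. exists (dist a a + rho + dist b' b). exists a, b'. auto. Qed.

Lemma cset_lb a b x : cset a b x -> rho <= x.
Proof. intros [a' [b' [_ ->]]]. pose proof (dist_nonneg _ a a'). pose proof (dist_nonneg _ b' b). lra. Qed.

Lemma C1 a b : rho <= cross a b.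
Proof. destruct (cset_ne a b) as [v Hv]. apply (glb_fin _ _ _ Hv (cset_lb a b)). Qed.
Lemma C2 a b a' b' : Rl a' b' -> cross a b <= dist a a' + rho + dist b' b.
Proof. intros H. destruct (cset_ne a b) as [v Hv]. apply (glb_fin _ _ _ Hv (cset_lb a b)).
  exists a', b'. auto. Qed.
Lemma C3 a b eps : 0 < eps -> exists a' b', Rl a' b' /\ dist a a' + rho + dist b' b < cross a b + eps.
Proof. intros He. destruct (cset_ne a b) as [v Hv].
  destruct (proj2 (proj2 (glb_fin _ _ _ Hv (cset_lb a b))) eps He) as [x [[a' [b' [H ->]]] Hx]].
  exists a', b'. auto. Qed.

Lemma T1 a a2 b : cross a b <= dist a a2 + cross a2 b.
Proof. apply Rle_plus_epsilon. intros eps He. destruct (C3 a2 b eps He) as [a' [b' [H Hl]]].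
  pose proof (C2 a b a' b' H). pose proof (dist_tri _ a a2 a'). lra. Qed.
Lemma T2 a b b2 : cross a b <= cross a b2 + dist b2 b.
Proof. apply Rle_plus_epsilon. intros eps He. destruct (C3 a b2 eps He) as [a' [b' [H Hl]]].
  pose proof (C2 a b a' b' H). pose proof (dist_tri _ b' b2 b). lra. Qed.
Lemma T3 a a2 b : dist a a2 <= cross a b + cross a2 b.
Proof. apply Rle_plus_epsilon. intros eps He.
  destruct (C3 a b (eps/2)) as [a' [b' [H Hl]]]; [lra|].
  destruct (C3 a2 b (eps/2)) as [a'' [b'' [H' Hl']]]; [lra|].
  pose proof (Hd _ _ _ _ H H') as Hx. apply abs_le_iff in Hx.
  pose proof (dist_tri _ a a' a2). pose proof (dist_tri _ a' a'' a2).
  pose proof (dist_tri _ b' b b''). rewrite (dist_sym _ a'' a2) in *. rewrite (dist_sym _ b b'') in *.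
  lra. Qed.
Lemma T4 a b b2 : dist b b2 <= cross a b + cross a b2.
Proof. apply Rle_plus_epsilon. intros eps He.
  destruct (C3 a b (eps/2)) as [a' [b' [H Hl]]]; [lra|].
  destruct (C3 a b2 (eps/2)) as [a'' [b'' [H' Hl']]]; [lra|].
  pose proof (Hd _ _ _ _ H H') as Hx. apply abs_le_iff in Hx.
  pose proof (dist_tri _ b b' b2). pose proof (dist_tri _ b' b'' b2).
  pose proof (dist_tri _ a' a a''). rewrite (dist_sym _ b b') in *. rewrite (dist_sym _ a' a) in *.
  lra. Qed.

Definition Zd (x y : A + B) : R :=
  match x, y with
  | inl a, inl a' => dist a a'
  | inr b, inr b' => dist b b'
  | inl a, inr b => cross a b
  | inr b, inl a => cross a b
  end.

Lemma Zd_eq0 x y : Zd x y = 0 <-> x = y.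
Proof.
  destruct x as [a|b], y as [a'|b']; simpl.
  - rewrite dist_eq0. split; [intros ->|intros H; inversion H]; auto.
  - pose proof (C1 a b'). split; intros H'; [lra| discriminate].
  - pose proof (C1 a' b). split; intros H'; [lra| discriminate].
  - rewrite dist_eq0. split; [intros ->|intros H; inversion H]; auto.
Qed.
Lemma Zd_sym x y : Zd x y = Zd y x.
Proof. destruct x, y; simpl; auto using dist_sym. Qed.
Lemma Zd_tri x y z : Zd x z <= Zd x y + Zd y z.
Proof.
  destruct x as [a|b], y as [a2|b2], z as [a3|b3]; simpl.
  - apply dist_tri.
  - apply T1.
  - apply T3.
  - apply T2.
  - rewrite (dist_sym _ a2 a3). pose proof (T1 a3 a2 b). lra.
  - apply T4.
  - pose proof (T2 a3 b b2). rewrite (dist_sym _ b2 b) in H. lra.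
  - apply dist_tri.
Qed.

Definition Zsp : MetricSpace := Build_MetricSpace (A + B) Zd Zd_eq0 Zd_sym Zd_tri.

Lemma dGH_rel_aux : Rbar_le (dGH A B) (Finite rho).
Proof.
  apply dGH_le_of. exists Zsp, inl, inr. split; [|split].
  - intros x x'. reflexivity.
  - intros x x'. reflexivity.
  - split.
    + intros z [a ->] eps He. destruct (HA a) as [b Hb]. exists (inr b). split; eauto.
      simpl. pose proof (C2 a b a b Hb). rewrite !dist_self in H. lra.
    + intros z [b ->] eps He. destruct (HB b) as [a Ha]. exists (inl a). split; eauto.
      simpl. pose proof (C2 a b a b Ha). rewrite !dist_self in H. lra.
Qed.
End Glue.

Lemma dGH_rel (A B : MetricSpace) (Rl : A -> B -> Prop) (rho : R) : 0 < rho ->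
  (forall a, exists b, Rl a b) -> (forall b, exists a, Rl a b) ->
  (forall a a' b b', Rl a b -> Rl a' b' -> Rabs (dist a a' - dist b b') <= 2*rho) ->
  Rbar_le (dGH A B) (Finite rho).
Proof. intros. eapply dGH_rel_aux; eauto. Qed.

Lemma dGH_refl_le (X : MetricSpace) rho : 0 < rho -> Rbar_le (dGH X X) (Finite rho).
Proof. intros H. apply (dGH_rel X X eq); eauto. intros a a' b b' -> ->.
  rewrite Rminus_diag, Rabs_R0. lra. Qed.

Lemma dGH_self (X : MetricSpace) : inhabited X -> dGH X X = Finite 0.
Proof.
  intros Hi. apply Rbar_le_antisym.
  - destruct (dGH X X) as [l| |] eqn:E.
    + simpl. apply Rle_plus_epsilon. intros eps He. pose proof (dGH_refl_le X eps He).
      rewrite E in H. simpl in H. lra.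
    + pose proof (dGH_refl_le X 1 Rlt_0_1). rewrite E in H. simpl in H. contradiction.
    + simpl. auto.
  - apply dGH_ge_of. intros rho H. eapply GH_nonneg; eauto.
Qed.


Definition lamc (l : R) : R := if Rlt_dec 0 l then l else 1.
Definition tauc (t : R) : R := if Rle_dec 0 t then (if Rlt_dec t 1 then t else 0) else 0.
Lemma lamc_pos l : 0 < lamc l.
Proof. unfold lamc; destruct Rlt_dec; lra. Qed.
Lemma lamc_id l : 0 < l -> lamc l = l.
Proof. unfold lamc; destruct Rlt_dec; lra. Qed.
Lemma tauc_rng t : 0 <= tauc t < 1.
Proof. unfold tauc; destruct Rle_dec; [destruct Rlt_dec|]; lra. Qed.
Lemma tauc_id t : 0 <= t < 1 -> tauc t = t.
Proof. intros. unfold tauc; destruct Rle_dec; [destruct Rlt_dec|]; lra. Qed.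

Section W.
Variables (M X : MetricSpace) (c : X -> M) (x0 : X).

Definition Dt (t : R) (x y : X) : R := (1 - t) * dist x y + t * dist (c x) (c y).

Lemma Dt_nonneg t x y : 0 <= t <= 1 -> 0 <= Dt t x y.
Proof. intros. unfold Dt. pose proof (dist_nonneg _ x y). pose proof (dist_nonneg _ (c x) (c y)). nra. Qed.
Lemma Dt_sym t x y : Dt t x y = Dt t y x.
Proof. unfold Dt. rewrite (dist_sym _ x y), (dist_sym _ (c x)). auto. Qed.
Lemma Dt_tri t x y z : 0 <= t <= 1 -> Dt t x z <= Dt t x y + Dt t y z.
Proof. intros. unfold Dt. pose proof (dist_tri _ x y z). pose proof (dist_tri _ (c x) (c y) (c z)). nra. Qed.
Lemma Dt_self t x : Dt t x x = 0.
Proof. unfold Dt. rewrite !dist_self. ring. Qed.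

Definition Wd (l t : R) (a b : option X) : R :=
  match a, b with
  | Some x, Some y => Dt t x y
  | Some x, None => Rmax l (Dt t x0 x)
  | None, Some x => Rmax l (Dt t x0 x)
  | None, None => 0
  end.

Lemma Wd_eq0 l t : 0 < l -> 0 <= t < 1 -> forall a b, Wd l t a b = 0 <-> a = b.
Proof.
  intros Hl Ht a b. destruct a as [x|], b as [y|]; simpl.
  - split.
    + intros H. unfold Dt in H. pose proof (dist_nonneg _ x y). pose proof (dist_nonneg _ (c x) (c y)).
      assert (dist x y = 0) by nra. apply dist_eq0 in H2. subst; auto.
    + intros H; inversion H; subst. apply Dt_self.
  - pose proof (Rmax_l l (Dt t x0 x)). split; intros; [lra|discriminate].
  - pose proof (Rmax_l l (Dt t x0 y)). split; intros; [lra|discriminate].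
  - split; auto.
Qed.
Lemma Wd_sym l t a b : Wd l t a b = Wd l t b a.
Proof. destruct a, b; simpl; auto using Dt_sym. Qed.
Lemma Wd_tri l t : 0 < l -> 0 <= t < 1 -> forall a b d, Wd l t a d <= Wd l t a b + Wd l t b d.
Proof.
  intros Hl Ht a b d.
  assert (Ht' : 0 <= t <= 1) by lra.
  destruct a as [x|], b as [y|], d as [z|]; simpl; unfold Rmax;
  repeat match goal with |- context [Rle_dec ?a ?b] => destruct (Rle_dec a b) end;
  try (pose proof (Dt_tri t x y z Ht'));
  try (pose proof (Dt_tri t x0 x y Ht')); try (pose proof (Dt_tri t x0 y z Ht'));
  try (pose proof (Dt_tri t x0 x z Ht')); try (pose proof (Dt_tri t x0 y x Ht'));
  try (pose proof (Dt_tri t x0 z y Ht'));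
  try (pose proof (Dt_nonneg t x y Ht')); try (pose proof (Dt_nonneg t y z Ht'));
  try (pose proof (Dt_nonneg t x0 x Ht')); try (pose proof (Dt_nonneg t x0 y Ht'));
  try (pose proof (Dt_nonneg t x0 z Ht'));
  try (pose proof (Dt_tri t x x0 z Ht')); try (pose proof (Dt_sym t x x0));
  try (pose proof (Dt_sym t x y)); try (pose proof (Dt_sym t y z)); try (pose proof (Dt_sym t z x));
  try lra.
Qed.

Definition mkW (l t : R) : MetricSpace :=
  Build_MetricSpace (option X) (Wd (lamc l) (tauc t))
    (Wd_eq0 _ _ (lamc_pos l) (tauc_rng t)) (Wd_sym _ _) (Wd_tri _ _ (lamc_pos l) (tauc_rng t)).

End W.


Lemma subseq (P : nat -> Prop) : (forall N, exists n, (N <= n)%nat /\ P n) ->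
  exists phi : nat -> nat, (forall n, (phi n < phi (S n))%nat) /\ forall n, P (phi n).
Proof.
  intros H. destruct (my_choice _ H) as [f Hf].
  exists (fun n => nat_rec (fun _ => nat) (f 0%nat) (fun _ p => f (S p)) n). split.
  - intro n. simpl. destruct (Hf (S (nat_rec (fun _ => nat) (f 0%nat) (fun _ p => f (S p)) n))). lia.
  - intro n. destruct n; simpl; apply Hf.
Qed.

Lemma feature (M W : MetricSpace) r : 0 < r ->
  (forall m m' : M, m <> m' -> 4*r < dist m m') ->
  forall a b : W, dist a b = 2*r -> Rbar_le (Finite r) (dGH M W).
Proof.
  intros Hr HS a b Hab. apply dGH_ge_of. intros rho Hrho. apply Rnot_lt_le; intro Hlt.
  destruct (GH_rel _ _ _ Hrho ((r-rho)/2)) as [Rl [HA [HB Hd]]]; [lra|].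
  destruct (HB a) as [m Hm], (HB b) as [m' Hm'].
  specialize (Hd m m' a b Hm Hm'). rewrite Hab in Hd. apply abs_le_iff in Hd.
  destruct (classic (m = m')) as [->|Hn].
  - rewrite dist_self in Hd. lra.
  - apply HS in Hn. lra.
Qed.

Section Props.
Variables (M X : MetricSpace) (r : R) (c : X -> M) (x0 : X).
Hypothesis Hr : 0 < r.
Hypothesis HS : forall m m' : M, m <> m' -> 4*r < dist m m'.
Hypothesis Hdis : forall x y, Rabs (dist x y - dist (c x) (c y)) <= 2*r.
Hypothesis Hsurj : forall m, exists x, c x = m.

Lemma loc_const x y : dist x y < 2*r -> c x = c y.
Proof. intros H. apply NNPP; intro Hn. apply HS in Hn. specialize (Hdis x y).
  apply abs_le_iff in Hdis. lra. Qed.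

Lemma HSS t x y : 0 <= t < 1 -> Rabs (dist (c x) (c y) - Dt M X c t x y) <= 2*r.
Proof. intros Ht. specialize (Hdis x y). apply abs_le_iff in Hdis. apply abs_le_iff.
  unfold Dt. nra. Qed.

Lemma HNS l t x : 0 < l <= 2*r -> 0 <= t < 1 ->
  Rabs (dist (c x0) (c x) - Rmax l (Dt M X c t x0 x)) <= 2*r.
Proof.
  intros Hl Ht. unfold Rmax. destruct (Rle_dec l (Dt M X c t x0 x)).
  - apply HSS; auto.
  - destruct (classic (c x0 = c x)) as [E|E].
    + rewrite E, dist_self. apply abs_le_iff. lra.
    + apply HS in E. pose proof (Hdis x0 x) as H. apply abs_le_iff in H. exfalso.
      unfold Dt in n. nra.
Qed.

Lemma W_ub l t : 0 < l <= 2*r -> 0 <= t < 1 -> Rbar_le (dGH M (mkW M X c x0 l t)) (Finite r).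
Proof.
  intros Hl Ht.
  apply (dGH_rel M (mkW M X c x0 l t)
    (fun m w => match w with Some x => c x = m | None => c x0 = m end) r Hr).
  - intro m. destruct (Hsurj m) as [x Hx]. exists (Some x). auto.
  - intro w. destruct w; eauto.
  - intros m m' w w' H1 H2. simpl. rewrite lamc_id, tauc_id by lra.
    destruct w as [x|], w' as [x'|]; subst; simpl.
    + apply HSS; auto.
    + rewrite dist_sym. apply HNS; auto.
    + apply HNS; auto.
    + rewrite !dist_self, Rminus_0_r, Rabs_R0. lra.
Qed.

Lemma W_compact l t : compact_space X -> compact_space (mkW M X c x0 l t).
Proof.
  intros HX u.
  destruct (classic (forall N, exists n, (N <= n)%nat /\ u n = None)) as [Hn|Hn].
  - destruct (subseq _ Hn) as [phi [Hi Hp]]. exists phi, None. split; auto.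
    intros eps He. exists 0%nat. intros n _. rewrite Hp. simpl. lra.
  - apply not_all_ex_not in Hn. destruct Hn as [N HN].
    assert (HN' : forall n, (N <= n)%nat -> u n <> None).
    { intros n Hn Hu. apply HN. exists n. auto. }
    set (v := fun k => match u (N + k)%nat with Some x => x | None => x0 end).
    destruct (HX v) as [phi [x [Hi Hc]]].
    exists (fun k => (N + phi k)%nat), (Some x). split.
    + intro n. specialize (Hi n). lia.
    + intros eps He. destruct (Hc (Rmin eps (2*r))) as [N' HN''].
      { apply Rmin_pos; lra. }
      exists N'. intros n Hn. specialize (HN'' n Hn).
      pose proof (Rmin_l eps (2*r)). pose proof (Rmin_r eps (2*r)).
      assert (Hu := HN' (N + phi n)%nat ltac:(lia)).
      unfold v in HN''. destruct (u (N + phi n)%nat) as [y|] eqn:E; [|congruence].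
      simpl. unfold Dt. rewrite (loc_const y x) by lra. rewrite dist_self.
      pose proof (tauc_rng t). pose proof (dist_nonneg _ y x). nra.
Qed.

Lemma W_lb_restrict l : dGH M X = Finite r -> 0 < l <= 2*r ->
  Rbar_le (Finite r) (dGH M (mkW M X c x0 l 0)).
Proof.
  intros HX Hl. apply dGH_ge_of. intros rho Hrho. apply Rnot_lt_le; intro Hlt.
  assert (H0 : 0 <= rho) by (eapply GH_nonneg; [exact (inhabits (c x0))| exact Hrho]).
  destruct (GH_rel _ _ _ Hrho ((r-rho)/2)) as [Rl [HA [HB Hd]]]; [lra|].
  assert (Rbar_le (dGH M X) (Finite (rho + (r-rho)/2))).
  { apply (dGH_rel M X (fun m x => Rl m (Some x))); [lra| | |].
    - intro m. destruct (HA m) as [[x|] Hw]; [eauto|].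
      destruct (HB (Some x0)) as [m' Hm']. specialize (Hd m m' None (Some x0) Hw Hm').
      simpl in Hd. rewrite lamc_id, tauc_id, Dt_self, Rmax_left in Hd by lra.
      destruct (classic (m = m')) as [->|Hn]; [eauto|].
      apply HS in Hn. apply abs_le_iff in Hd. lra.
    - intro x. apply HB.
    - intros m m' x x' h1 h2. specialize (Hd _ _ _ _ h1 h2). simpl in Hd.
      rewrite tauc_id in Hd by lra. unfold Dt in Hd.
      replace ((1 - 0) * dist x x' + 0 * dist (c x) (c x')) with (dist x x') in Hd by ring.
      lra. }
  rewrite HX in H. simpl in H. lra.
Qed.

End Props.


Lemma lub_fin (E : R -> Prop) x0 B : E x0 -> (forall x, E x -> x <= B) ->
  exists v, Lub_Rbar E = Finite v /\ v <= B.
Proof.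
  intros H0 HB. destruct (Lub_Rbar_correct E) as [H1 H2].
  destruct (Lub_Rbar E) as [l| |].
  - exists l. split; auto. specialize (H2 (Finite B)). simpl in H2. apply H2.
    intros x Hx. simpl. auto.
  - specialize (H2 (Finite B)). simpl in H2. exfalso. apply H2. intros x Hx. simpl. auto.
  - specialize (H1 x0 H0). simpl in H1. contradiction.
Qed.

Lemma dGH_rel_flip (A B : MetricSpace) (Rl : A -> B -> Prop) (rho : R) : 0 < rho ->
  (forall a, exists b, Rl a b) -> (forall b, exists a, Rl a b) ->
  (forall a a' b b', Rl a b -> Rl a' b' -> Rabs (dist a a' - dist b b') <= 2*rho) ->
  Rbar_le (dGH B A) (Finite rho).
Proof. intros Hr HA HB Hd. apply (dGH_rel B A (fun b a => Rl a b)); auto.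
  intros b b' a a' h1 h2. rewrite Rabs_minus_sym. auto. Qed.

Lemma rmax_lip a b a' b' : Rabs (Rmax a b - Rmax a' b') <= Rabs (a - a') + Rabs (b - b').
Proof.
  pose proof (Rle_abs (a-a')). pose proof (Rle_abs (a'-a)). rewrite Rabs_minus_sym in H0.
  pose proof (Rle_abs (b-b')). pose proof (Rle_abs (b'-b)). rewrite (Rabs_minus_sym b' b) in H2.
  unfold Rmax; destruct (Rle_dec a b), (Rle_dec a' b'); apply abs_le_iff; lra.
Qed.

Lemma mul_abs_bound s z k : 0 <= s -> Rabs z <= k -> -(s*k) <= s*z <= s*k.
Proof. intros Hs Hz. apply abs_le_iff in Hz. nra. Qed.

Section OPT.
Variables (M X : MetricSpace) (r s0 e0 : R).
Hypothesis Hr : 0 < r.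
Hypothesis Hs0 : 4*r < s0.
Hypothesis HSs : forall m m' : M, m <> m' -> s0 <= dist m m'.
Hypothesis He0 : 4*r < e0.
Hypothesis HE : forall (f : M -> M) v, (forall x y, f x = f y -> x = y) -> (forall y, exists x, f x = y) ->
  (exists x, f x <> x) -> dis f = Finite v -> e0 <= v.

Lemma OPT2 (K : R) (c c' : X -> M) : 2*K < s0 -> 2*K < e0 ->
  (forall m, exists x, c x = m) -> (forall m, exists x, c' x = m) ->
  (forall x y, Rabs (dist x y - dist (c x) (c y)) <= K) ->
  (forall x y, Rabs (dist x y - dist (c' x) (c' y)) <= K) ->
  forall x, c x = c' x.
Proof.
  intros Ks Ke Sc Sc' Dc Dc'.
  assert (claim : forall (c1 c2 : X -> M), (forall x y, Rabs (dist x y - dist (c1 x) (c1 y)) <= K) ->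
    (forall x y, Rabs (dist x y - dist (c2 x) (c2 y)) <= K) ->
    forall x y, c1 x = c1 y -> c2 x = c2 y).
  { intros c1 c2 D1 D2 x y E. apply NNPP; intro Hn. apply HSs in Hn.
    specialize (D1 x y). specialize (D2 x y). rewrite E, dist_self in D1.
    apply abs_le_iff in D1. apply abs_le_iff in D2. lra. }
  destruct (my_choice _ Sc) as [g Hg].
  set (sg := fun m => c' (g m)).
  assert (Hsc : forall x, sg (c x) = c' x).
  { intro x. unfold sg. apply (claim c c'); auto. }
  assert (Hid : forall m, sg m = m).
  { apply NNPP; intro Hn. apply not_all_ex_not in Hn. destruct Hn as [m0 Hm0].
    destruct (lub_fin (fun v => exists x x', v = Rabs (dist x x' - dist (sg x) (sg x')))
      (Rabs (dist m0 m0 - dist (sg m0) (sg m0))) (2*K)) as [v [Hv Hvb]].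
    - eauto.
    - intros v [m [m' ->]].
      replace (dist m m') with (dist (c (g m)) (c (g m'))) by (rewrite !Hg; auto). unfold sg.
      pose proof (Dc (g m) (g m')) as h1. pose proof (Dc' (g m) (g m')) as h2.
      apply abs_le_iff in h1. apply abs_le_iff in h2. apply abs_le_iff. lra.
    - assert (e0 <= v).
      { apply (HE sg v).
        + intros a b E. rewrite <- (Hg a), <- (Hg b).
          apply (claim c' c); auto.
        + intro y. destruct (Sc' y) as [x Hx]. exists (c x). rewrite Hsc. auto.
        + eauto.
        + unfold dis. exact Hv. }
      lra. }
  intro x. rewrite <- Hsc, Hid. auto.
Qed.

Lemma OPT1 (HX : dGH M X = Finite r) eps : 0 < eps -> eps <= r/2 ->
  exists c : X -> M, (forall m, exists x, c x = m) /\
     forall x y, Rabs (dist x y - dist (c x) (c y)) <= 2*r + 4*eps.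
Proof.
  intros He Hle.
  destruct (dGH_approx _ _ _ HX eps He) as [rho [Hrho Hlt]].
  destruct (GH_rel _ _ _ Hrho eps He) as [Rl [HA [HB Hd]]].
  destruct (my_choice _ HB) as [c Hc].
  exists c. split.
  - intro m. destruct (HA m) as [x Hx]. exists x.
    specialize (Hd m (c x) x x Hx (Hc x)). rewrite dist_self, Rminus_0_r in Hd.
    apply NNPP; intro Hn. assert (m <> c x) by auto. apply HSs in H.
    rewrite Rabs_pos_eq in Hd by (apply dist_nonneg). lra.
  - intros x y. specialize (Hd (c x) (c y) x y (Hc x) (Hc y)). rewrite Rabs_minus_sym. lra.
Qed.

Lemma OPT (HX : dGH M X = Finite r) : exists c : X -> M, (forall m, exists x, c x = m) /\
     forall x y, Rabs (dist x y - dist (c x) (c y)) <= 2*r.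
Proof.
  set (k := Rmin (r/2) (Rmin ((s0-4*r)/16) ((e0-4*r)/16))).
  assert (Hk1 : k <= r/2) by apply Rmin_l.
  assert (Hk2 : k <= (s0-4*r)/16) by (eapply Rle_trans; [apply Rmin_r|apply Rmin_l]).
  assert (Hk3 : k <= (e0-4*r)/16) by (eapply Rle_trans; [apply Rmin_r|apply Rmin_r]).
  assert (Hk : 0 < k) by (apply Rmin_pos; [lra| apply Rmin_pos; lra]).
  destruct (OPT1 HX k Hk Hk1) as [c0 [S0 D0]].
  exists c0. split; auto. intros x y.
  apply Rnot_lt_le; intro Hlt.
  set (a := Rabs (dist x y - dist (c0 x) (c0 y))) in *.
  set (eps := Rmin k ((a - 2*r)/8)).
  assert (He : 0 < eps) by (apply Rmin_pos; lra).
  assert (He1 : eps <= k) by apply Rmin_l.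
  assert (He2 : eps <= (a - 2*r)/8) by apply Rmin_r.
  destruct (OPT1 HX eps He ltac:(lra)) as [c1 [S1 D1]].
  assert (E : forall z, c1 z = c0 z).
  { apply (OPT2 (2*r + 4*k)); auto; try lra.
    intros u v. specialize (D1 u v). lra. }
  specialize (D1 x y). rewrite !E in D1. fold a in D1. lra.
Qed.
End OPT.


Lemma rmax_lip1 l a b : Rabs (Rmax l a - Rmax l b) <= Rabs (a - b).
Proof. pose proof (rmax_lip l a l b). rewrite Rminus_diag, Rabs_R0 in H. lra. Qed.

Section E1.
Variables (M X : MetricSpace) (r : R) (c : X -> M) (x0 : X).
Hypothesis Hr : 0 < r.
Hypothesis Hdis : forall x y, Rabs (dist x y - dist (c x) (c y)) <= 2*r.

Lemma Dt_diff t t' x y : Rabs (Dt M X c t x y - Dt M X c t' x y) <= 2*r * Rabs (t - t').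
Proof.
  replace (Dt M X c t x y - Dt M X c t' x y) with ((t' - t) * (dist x y - dist (c x) (c y)))
    by (unfold Dt; ring).
  rewrite Rabs_mult, Rabs_minus_sym. pose proof (Rabs_pos (t - t')).
  pose proof (Hdis x y). nra.
Qed.

Lemma E1 l l' t t' rho : 0 < l -> 0 < l' -> 0 <= t < 1 -> 0 <= t' < 1 -> 0 < rho ->
  Rabs (l - l') + 2*r*Rabs (t - t') <= 2*rho ->
  Rbar_le (dGH (mkW M X c x0 l t) (mkW M X c x0 l' t')) (Finite rho).
Proof.
  intros Hl Hl' Ht Ht' Hrho Hb.
  apply (dGH_rel (mkW M X c x0 l t) (mkW M X c x0 l' t') (fun a b => a = b)); eauto.
  intros a a' b b' <- <-. simpl. try (rewrite !lamc_id by lra); try (rewrite !tauc_id by lra).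
  pose proof (Rabs_pos (l - l')).
  destruct a as [x|], a' as [x'|]; simpl.
  - pose proof (Dt_diff t t' x x'). lra.
  - pose proof (rmax_lip l (Dt M X c t x0 x) l' (Dt M X c t' x0 x)).
    pose proof (Dt_diff t t' x0 x). lra.
  - pose proof (rmax_lip l (Dt M X c t x0 x') l' (Dt M X c t' x0 x')).
    pose proof (Dt_diff t t' x0 x'). lra.
  - rewrite Rminus_diag, Rabs_R0. pose proof (Rabs_pos (t-t')). lra.
Qed.

Lemma Dt0 x y : Dt M X c 0 x y = dist x y.
Proof. unfold Dt. ring. Qed.

Lemma E2_aux l x : 0 < l -> Rabs (dist x0 x - Rmax l (Dt M X c 0 x0 x)) <= l.
Proof. intros Hl. rewrite Dt0. pose proof (dist_nonneg _ x0 x).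
  unfold Rmax; destruct Rle_dec; apply abs_le_iff; lra. Qed.

Lemma E2 l rho : 0 < l -> 0 < rho -> l <= 2*rho ->
  Rbar_le (dGH X (mkW M X c x0 l 0)) (Finite rho) /\
  Rbar_le (dGH (mkW M X c x0 l 0) X) (Finite rho).
Proof.
  intros Hl Hrho Hb.
  set (Rl := fun (x : X) (w : option X) => w = Some x \/ (w = None /\ x = x0)).
  assert (HA : forall a, exists b, Rl a b) by (intro a; exists (Some a); left; auto).
  assert (HB : forall b, exists a, Rl a b) by (intros [x|]; [exists x; left; auto| exists x0; right; auto]).
  assert (Hd : forall a a' b b', Rl a b -> Rl a' b' -> Rabs (dist a a' - @dist (mkW M X c x0 l 0) b b') <= 2*rho).
  { intros a a' b b' [->|[-> ->]] [->|[-> ->]]; simpl; try (rewrite !lamc_id by lra); try (rewrite !tauc_id by lra).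
    - rewrite Dt0, Rminus_diag, Rabs_R0. lra.
    - rewrite dist_sym. pose proof (E2_aux l a Hl). lra.
    - pose proof (E2_aux l a' Hl). lra.
    - rewrite dist_self, Rminus_diag, Rabs_R0. lra. }
  split.
  - apply (dGH_rel X (mkW M X c x0 l 0) Rl); auto.
  - apply (dGH_rel_flip X (mkW M X c x0 l 0) Rl); auto.
Qed.
End E1.

Section E4.
Variables (M A B : MetricSpace) (r kA kB : R) (cA : A -> M) (a0 : A) (cB : B -> M) (b0 : B).
Hypothesis Hr : 0 < r.
Hypothesis H0 : cA a0 = cB b0.
Hypothesis SA : forall m, exists a, cA a = m.
Hypothesis SB : forall m, exists b, cB b = m.
Hypothesis DA : forall x y, Rabs (dist x y - dist (cA x) (cA y)) <= kA.
Hypothesis DB : forall x y, Rabs (dist x y - dist (cB x) (cB y)) <= kB.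

Lemma core t t' a a' b b' : cA a = cB b -> cA a' = cB b' -> 0 <= t < 1 -> 0 <= t' < 1 ->
  Rabs (Dt M A cA t a a' - Dt M B cB t' b b') <= (1-t)*kA + (1-t')*kB.
Proof.
  intros E E' Ht Ht'. unfold Dt. rewrite E, E'.
  pose proof (DA a a') as h1. rewrite E, E' in h1. pose proof (DB b b') as h2.
  apply (mul_abs_bound (1-t)) in h1; [|lra]. apply (mul_abs_bound (1-t')) in h2; [|lra].
  apply abs_le_iff. nra.
Qed.

Definition R4 (wa : option A) (wb : option B) : Prop :=
  match wa, wb with Some a, Some b => cA a = cB b | None, None => True | _, _ => False end.

Lemma E4 t t' rho : 0 <= t < 1 -> 0 <= t' < 1 -> 0 < rho -> (1-t)*kA + (1-t')*kB <= 2*rho ->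
  Rbar_le (dGH (mkW M A cA a0 (2*r) t) (mkW M B cB b0 (2*r) t')) (Finite rho).
Proof.
  intros Ht Ht' Hrho Hb.
  apply (dGH_rel (mkW M A cA a0 (2*r) t) (mkW M B cB b0 (2*r) t') R4 rho Hrho).
  - intros [a|]; simpl; [|exists None; simpl; auto].
    destruct (SB (cA a)) as [b Hb']. exists (Some b). simpl. auto.
  - intros [b|]; simpl; [|exists None; simpl; auto].
    destruct (SA (cB b)) as [a Ha]. exists (Some a). simpl. auto.
  - intros wa wa' wb wb' h1 h2. simpl. try (rewrite !lamc_id by lra); try (rewrite !tauc_id by lra).
    destruct wa as [a|], wb as [b|]; simpl in h1; try contradiction;
    destruct wa' as [a'|], wb' as [b'|]; simpl in h2; try contradiction; simpl.
    + pose proof (core t t' a a' b b' h1 h2 Ht Ht'). lra.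
    + pose proof (rmax_lip1 (2*r) (Dt M A cA t a0 a) (Dt M B cB t' b0 b)).
      pose proof (core t t' a0 a b0 b H0 h1 Ht Ht'). lra.
    + pose proof (rmax_lip1 (2*r) (Dt M A cA t a0 a') (Dt M B cB t' b0 b')).
      pose proof (core t t' a0 a' b0 b' H0 h2 Ht Ht'). lra.
    + rewrite Rminus_diag, Rabs_R0. lra.
Qed.
End E4.


Definition lam (r u : R) := Rmin (4*r*u) (2*r).
Definition tau (u : R) := Rmax 0 (2*u-1).

Section LT.
Variable r : R.
Hypothesis Hr : 0 < r.
Lemma lam_rng u : 0 < u -> 0 < lam r u <= 2*r.
Proof. intros. unfold lam, Rmin. destruct Rle_dec; nra. Qed.
Lemma tau_rng u : u < 1 -> 0 <= tau u < 1.
Proof. intros. unfold tau, Rmax. destruct Rle_dec; lra. Qed.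
Lemma tau_0 u : u <= 1/2 -> tau u = 0.
Proof. intros. unfold tau, Rmax. destruct Rle_dec; lra. Qed.
Lemma tau_hi u : 1/2 <= u -> tau u = 2*u-1.
Proof. intros. unfold tau, Rmax. destruct Rle_dec; lra. Qed.
Lemma lam_hi u : 1/2 <= u -> lam r u = 2*r.
Proof. intros. unfold lam, Rmin. destruct Rle_dec; nra. Qed.
Lemma lam_le u : lam r u <= 4*r*u.
Proof. unfold lam. apply Rmin_l. Qed.
Lemma lam_lip u v : Rabs (lam r u - lam r v) <= 4*r*Rabs (u-v).
Proof.
  pose proof (Rle_abs (u-v)). pose proof (Rle_abs (v-u)). rewrite Rabs_minus_sym in H0.
  unfold lam, Rmin. destruct (Rle_dec (4*r*u) (2*r)), (Rle_dec (4*r*v) (2*r)); apply abs_le_iff; nra.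
Qed.
Lemma tau_lip u v : Rabs (tau u - tau v) <= 2*Rabs (u-v).
Proof.
  pose proof (Rle_abs (u-v)). pose proof (Rle_abs (v-u)). rewrite Rabs_minus_sym in H0.
  unfold tau, Rmax. destruct (Rle_dec 0 (2*u-1)), (Rle_dec 0 (2*v-1)); apply abs_le_iff; lra.
Qed.
End LT.

Section Path.
Variables (M : MetricSpace) (r : R) (p1 : M).
Hypothesis Hr : 0 < r.
Hypothesis HS : forall m m' : M, m <> m' -> 4*r < dist m m'.
Hypothesis Mcomp : compact_space M.

Definition C1sp := mkW M M (fun m => m) p1 (2*r) 0.

Definition P (A : MetricSpace) (cA : A -> M) (a0 : A) (u : R) : MetricSpace :=
  if Rle_dec u 0 then A else if Rlt_dec u 1 then mkW M A cA a0 (lam r u) (tau u) else C1sp.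

Lemma Sid : forall m : M, exists x : M, x = m.
Proof. eauto. Qed.
Lemma Did0 : forall x y : M, Rabs (dist x y - dist x y) <= 0.
Proof. intros. rewrite Rminus_diag, Rabs_R0. lra. Qed.
Lemma Did : forall x y : M, Rabs (dist x y - dist x y) <= 2*r.
Proof. intros. rewrite Rminus_diag, Rabs_R0. lra. Qed.

Lemma feat_W (A : MetricSpace) (cA : A -> M) (a0 : A) t : 0 <= t < 1 ->
  Rbar_le (Finite r) (dGH M (mkW M A cA a0 (2*r) t)).
Proof.
  intros Ht. apply (feature M (mkW M A cA a0 (2*r) t) r Hr HS None (Some a0)).
  simpl. rewrite lamc_id, tauc_id, Dt_self, Rmax_left by lra. auto.
Qed.

Lemma C1_sphere : gh_sphere M r C1sp.
Proof.
  split.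
  - split. exact (inhabits None). apply (W_compact M M r (fun m => m) p1 Hr HS Did). auto.
  - apply Rbar_le_antisym.
    + apply (W_ub M M r (fun m => m) p1 Hr HS Did Sid); lra.
    + apply feat_W. lra.
Qed.

Section Base.
Variables (A : MetricSpace) (cA : A -> M) (a0 : A).
Hypothesis HAc : compact_space A.
Hypothesis HAd : dGH M A = Finite r.
Hypothesis SA : forall m, exists a, cA a = m.
Hypothesis DA : forall x y, Rabs (dist x y - dist (cA x) (cA y)) <= 2*r.
Hypothesis Ha0 : cA a0 = p1.

Lemma L_sphere u : 0 <= u <= 1 -> gh_sphere M r (P A cA a0 u).
Proof.
  intros Hu. unfold P. destruct (Rle_dec u 0).
  - split; [split; [exact (inhabits a0)|exact HAc]|exact HAd].
  - destruct (Rlt_dec u 1); [|apply C1_sphere].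
    pose proof (lam_rng r Hr u ltac:(lra)). pose proof (tau_rng u r0).
    split.
    + split. exact (inhabits None). apply (W_compact M A r cA a0 Hr HS DA). auto.
    + apply Rbar_le_antisym.
      * apply (W_ub M A r cA a0 Hr HS DA SA); auto.
      * destruct (Rle_dec u (1/2)).
        -- rewrite tau_0 by auto. apply (W_lb_restrict M A r cA a0 Hr HS); auto.
        -- rewrite lam_hi by lra. apply feat_W. auto.
Qed.

Lemma L_cont u v rho : 0 <= u <= 1 -> 0 <= v <= 1 -> Rabs (u - v) < 1/2 -> 0 < rho ->
  8*r*Rabs (u-v) <= 2*rho -> Rbar_le (dGH (P A cA a0 u) (P A cA a0 v)) (Finite rho).
Proof.
  intros Hu Hv Huv Hrho Hb.
  pose proof (Rle_abs (u-v)). pose proof (Rle_abs (v-u)). rewrite Rabs_minus_sym in H0.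
  unfold P. destruct (Rle_dec u 0), (Rlt_dec u 1), (Rle_dec v 0), (Rlt_dec v 1);
    try (exfalso; lra).
  - apply dGH_refl_le; auto.
  - rewrite tau_0 by lra. apply (E2 M A cA a0); [apply lam_rng; lra| auto|].
    pose proof (lam_le r v). nra.
  - rewrite tau_0 by lra. apply (E2 M A cA a0); [apply lam_rng; lra| auto|].
    pose proof (lam_le r u). nra.
  - apply (E1 M A r cA a0 DA); try apply lam_rng; try apply tau_rng; auto; try lra.
    pose proof (lam_lip r Hr u v). pose proof (tau_lip u v). pose proof (Rabs_pos (u-v)). nra.
  - unfold C1sp. rewrite lam_hi by lra.
    apply (E4 M A M r (2*r) 0 cA a0 (fun m => m) p1 Hr Ha0 SA Sid DA Did0);
      try apply tau_rng; auto; try lra.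
    rewrite tau_hi by lra. nra.
  - unfold C1sp. rewrite lam_hi by lra.
    apply (E4 M M A r 0 (2*r) (fun m => m) p1 cA a0 Hr (eq_sym Ha0) Sid SA Did0 DA);
      try apply tau_rng; auto; try lra.
    rewrite tau_hi by lra. nra.
  - apply dGH_refl_le; auto.
Qed.
End Base.

Lemma Cross (A : MetricSpace) (cA : A -> M) (a0 : A) (B : MetricSpace) (cB : B -> M) (b0 : B) :
  (forall m, exists a, cA a = m) -> (forall x y, Rabs (dist x y - dist (cA x) (cA y)) <= 2*r) -> cA a0 = p1 ->
  (forall m, exists b, cB b = m) -> (forall x y, Rabs (dist x y - dist (cB x) (cB y)) <= 2*r) -> cB b0 = p1 ->
  forall u v rho, 1/2 < u <= 1 -> 1/2 < v <= 1 -> 0 < rho -> 4*r*(1-u) + 4*r*(1-v) <= 2*rho ->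
  Rbar_le (dGH (P A cA a0 u) (P B cB b0 v)) (Finite rho).
Proof.
  intros SA DA Ha SB DB Hb u v rho Hu Hv Hrho Hbd.
  unfold P. destruct (Rle_dec u 0); [lra|]. destruct (Rle_dec v 0); [lra|].
  unfold C1sp.
  destruct (Rlt_dec u 1), (Rlt_dec v 1); try rewrite (lam_hi r Hr u) by lra; try rewrite (lam_hi r Hr v) by lra.
  - apply (E4 M A B r (2*r) (2*r) cA a0 cB b0 Hr (eq_trans Ha (eq_sym Hb)) SA SB DA DB);
      try apply tau_rng; auto. rewrite !tau_hi by lra. nra.
  - apply (E4 M A M r (2*r) 0 cA a0 (fun m => m) p1 Hr Ha SA Sid DA Did0);
      try apply tau_rng; auto; try lra. rewrite !tau_hi by lra. nra.
  - apply (E4 M M B r 0 (2*r) (fun m => m) p1 cB b0 Hr (eq_sym Hb) Sid SB Did0 DB);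
      try apply tau_rng; auto; try lra. rewrite !tau_hi by lra. nra.
  - apply dGH_refl_le; auto.
Qed.
End Path.


Lemma pigeon (M : MetricSpace) (l : list M) (u : nat -> M) : (forall x, In x l) ->
  exists m, forall N, exists n, (N <= n)%nat /\ u n = m.
Proof.
  intros Hl. apply NNPP; intro Hn.
  assert (H : forall m, exists N, forall n, (N <= n)%nat -> u n <> m).
  { intro m. apply NNPP; intro H1. apply Hn. exists m. intro N. apply NNPP; intro H2.
    apply H1. exists N. intros n Hn' E. apply H2. eauto. }
  assert (forall l', exists N, forall m, In m l' -> forall n, (N <= n)%nat -> u n <> m).
  { induction l' as [|a l' IH].
    - exists 0%nat. intros m [].
    - destruct IH as [N1 H1]. destruct (H a) as [N2 H2]. exists (Nat.max N1 N2).
      intros m [<-|Hm] n Hnn.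
      + apply H2. lia.
      + apply H1; auto. lia. }
  destruct (H0 l) as [N HN]. apply (HN (u N) (Hl _) N); auto.
Qed.

Lemma fin_compact (M : MetricSpace) : finite_space M -> compact_space M.
Proof.
  intros [l [_ Hl]] u. destruct (pigeon M l u Hl) as [m Hm].
  destruct (subseq (fun n => u n = m) Hm) as [phi [Hi Hp]].
  exists phi, m. split; auto. intros eps He. exists 0%nat. intros n _. rewrite Hp, dist_self. auto.
Qed.

Theorem corollary4 (M : MetricSpace) (r : R) :
  finite_space M -> generic M ->
  0 < r ->
  Rbar_lt (Finite (4 * r)) (sM M) ->
  Rbar_lt (Finite (4 * r)) (eM M) ->
  Rbar_lt (Finite (6 * r)) (tM M) ->
  gh_path_connected (gh_sphere M r).
Proof.
  intros Hfin [[p1 _] _] Hr Hs He _.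
  assert (lbS : forall m m' : M, m <> m' -> Rbar_le (sM M) (Finite (dist m m'))).
  { intros m m' H. unfold sM. destruct (Glb_Rbar_correct
      (fun v => exists x x' : M, x <> x' /\ v = dist x x')) as [H1 _]. apply H1. eauto. }
  assert (Hs0 : exists s0, 4*r < s0 /\ forall m m' : M, m <> m' -> s0 <= dist m m').
  { destruct (sM M) as [s| |] eqn:Es; simpl in Hs.
    - exists s. split; [exact Hs|]. intros m m' H. specialize (lbS m m' H). exact lbS.
    - exists (4*r+1). split; [lra|]. intros m m' H. specialize (lbS m m' H). contradiction.
    - contradiction. }
  destruct Hs0 as [s0 [Hs0 HSs]].
  assert (HS : forall m m' : M, m <> m' -> 4*r < dist m m').
  { intros m m' H. specialize (HSs m m' H). lra. }
  assert (lbE : forall (f : M -> M) v, (forall x y, f x = f y -> x = y) -> (forall y, exists x, f x = y) ->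
    (exists x, f x <> x) -> dis f = Finite v -> Rbar_le (eM M) (Finite v)).
  { intros f v H1 H2 H3 H4. unfold eM. destruct (Glb_Rbar_correct
      (fun v => exists f : M -> M, (forall x y, f x = f y -> x = y) /\ (forall y, exists x, f x = y) /\
     (exists x, f x <> x) /\ dis f = Finite v)) as [G _]. apply G. exists f. auto. }
  assert (He0 : exists e0, 4*r < e0 /\ forall (f : M -> M) v, (forall x y, f x = f y -> x = y) ->
    (forall y, exists x, f x = y) -> (exists x, f x <> x) -> dis f = Finite v -> e0 <= v).
  { destruct (eM M) as [e| |] eqn:Ee; simpl in He.
    - exists e. split; [exact He|]. intros f v H1 H2 H3 H4. exact (lbE f v H1 H2 H3 H4).
    - exists (4*r+1). split; [lra|]. intros f v H1 H2 H3 H4. specialize (lbE f v H1 H2 H3 H4).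
      contradiction.
    - contradiction. }
  destruct He0 as [e0 [He0 HE]].
  pose proof (fin_compact M Hfin) as Mcomp.
  intros X Y [[HXi HXc] HXd] [[HYi HYc] HYd].
  destruct (OPT M X r s0 e0 Hr Hs0 HSs He0 HE HXd) as [cX [SX DX]].
  destruct (OPT M Y r s0 e0 Hr Hs0 HSs He0 HE HYd) as [cY [SY DY]].
  destruct (SX p1) as [x0 Hx0]. destruct (SY p1) as [y0 Hy0].
  set (PX := P M r p1 X cX x0). set (PY := P M r p1 Y cY y0).
  exists (fun t => if Rle_dec t (1/2) then PX (2*t) else PY (2 - 2*t)).
  split; [|split; [|split]].
  - intros t Ht. destruct (Rle_dec t (1/2)).
    + apply (L_sphere M r p1 Hr HS Mcomp X cX x0); auto; lra.
    + apply (L_sphere M r p1 Hr HS Mcomp Y cY y0); auto; lra.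
  - intros t Ht eps Heps.
    set (d := Rmin (1/8) (eps/(32*r))).
    assert (Hd0 : 0 < d) by (apply Rmin_pos; [lra| apply Rdiv_lt_0_compat; lra]).
    assert (Hd1 : d <= 1/8) by apply Rmin_l.
    assert (Hd2 : d <= eps/(32*r)) by apply Rmin_r.
    assert (Hd3 : 32*r*d <= eps).
    { apply (Rmult_le_compat_l (32*r)) in Hd2; [|lra]. field_simplify in Hd2; lra. }
    exists d. split; auto. intros s Hs' Hst.
    assert (Hfin' : forall z, Rbar_le z (Finite (eps/4)) -> Rbar_lt z (Finite eps)).
    { intros [z| |] Hz; simpl in *; auto; lra. }
    apply Hfin'.
    pose proof (Rle_abs (s-t)). pose proof (Rle_abs (t-s)). rewrite Rabs_minus_sym in H0.
    destruct (Rle_dec s (1/2)), (Rle_dec t (1/2)).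
    + apply (L_cont M r p1 Hr X cX x0 SX DX Hx0); try lra.
      replace (2*s - 2*t) with (2*(s-t)) by ring. rewrite Rabs_mult, Rabs_pos_eq by lra. lra.
      replace (2*s - 2*t) with (2*(s-t)) by ring. rewrite Rabs_mult, (Rabs_pos_eq 2) by lra. nra.
    + apply (Cross M r p1 Hr X cX x0 Y cY y0 SX DX Hx0 SY DY Hy0); try lra. nra.
    + apply (Cross M r p1 Hr Y cY y0 X cX x0 SY DY Hy0 SX DX Hx0); try lra. nra.
    + apply (L_cont M r p1 Hr Y cY y0 SY DY Hy0); try lra.
      replace (2 - 2*s - (2 - 2*t)) with (2*(t-s)) by ring. rewrite Rabs_mult, Rabs_pos_eq by lra.
      rewrite Rabs_minus_sym. lra.
      replace (2 - 2*s - (2 - 2*t)) with (2*(t-s)) by ring. rewrite Rabs_mult, (Rabs_pos_eq 2) by lra.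
      rewrite Rabs_minus_sym. nra.
  - destruct (Rle_dec 0 (1/2)); [|lra]. unfold PX, P.
    destruct (Rle_dec (2*0) 0); [|lra]. apply dGH_self. auto.
  - destruct (Rle_dec 1 (1/2)); [lra|]. unfold PY, P.
    destruct (Rle_dec (2-2*1) 0); [|lra]. apply dGH_self. auto.
Qed.
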